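(* For every integer $n\ge 1$: $\overline{\mathrm{spt}}(n)$ is odd if and only if $n$ is a square or twice a square; $\overline{\mathrm{spt}}_1(n)$ is odd if and only if $n$ is an odd square; $\overline{\mathrm{spt}}_2(n)$ is odd if and only if $n$ is an even square or twice a square.
   Context: An overpartition of $n$ is a partition of $n$ in which the first occurrence of each part size may (optionally) be overlined. $\overline{\mathrm{spt}}(n)$ is the total number of smallest parts, summed over all overpartitions of $n$ whose smallest part is not overlined (overpartitions whose smallest part is overlined contribute nothing). $\overline{\mathrm{spt}}_1(n)$ is the same count restricted to those overpartitions whose smallest part is odd, and $\overline{\mathrm{spt}}_2(n)$ is the same count restricted to those whose smallest part is even. For example $\overline{\mathrm{spt}}(4)=13$, $\overline{\mathrm{spt}}_1(4)=10$, $\overline{\mathrm{spt}}_2(4)=3$. *)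

(* Defs.v *)
From mathcomp Require Import all_boot.
Set Implicit Arguments. Unset Strict Implicit. Unset Printing Implicit Defensive.

(* An overpartition of n is encoded (bijectively) by
   - m : {ffun 'I_n -> 'I_n.+1}, where m i is the multiplicity of the part
     size i.+1 (any multiplicity is <= n, so 'I_n.+1 suffices), and
   - o : {ffun 'I_n -> bool}, where o i says that (the first occurrence of)
     the part size i.+1 is overlined; overlining is only possible for part
     sizes that actually occur. *)
Definition is_overpartition (n : nat) (m : {ffun 'I_n -> 'I_n.+1})
    (o : {ffun 'I_n -> bool}) : bool :=
  (\sum_(i < n) i.+1 * m i == n) && [forall i, o i ==> (0 < m i)].

Definition is_smallest_part (n : nat) (m : {ffun 'I_n -> 'I_n.+1}) (i : 'I_n) : bool :=
  (0 < m i) && [forall j : 'I_n, (0 < m j) ==> (i <= j)].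

Definition sptbar_P (P : pred nat) (n : nat) : nat :=
  \sum_(m : {ffun 'I_n -> 'I_n.+1}) \sum_(o : {ffun 'I_n -> bool})
    \sum_(i < n | [&& is_overpartition m o, is_smallest_part m i, ~~ o i & P i.+1])
      (m i : nat).

Definition sptbar (n : nat) : nat := sptbar_P predT n.
Definition sptbar1 (n : nat) : nat := sptbar_P odd n.
Definition sptbar2 (n : nat) : nat := sptbar_P (fun k => ~~ odd k) n.

(* Main.v *)
Require Import Defs.
From mathcomp Require Import all_boot.
From mathcomp Require Import zify.
Set Implicit Arguments. Unset Strict Implicit. Unset Printing Implicit Defensive.

Lemma odd_sum_congr (I : Type) (r : seq I) (P : pred I) (F G : I -> nat) :
  (forall i, P i -> odd (F i) = odd (G i)) ->
  odd (\sum_(i <- r | P i) F i) = odd (\sum_(i <- r | P i) G i).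
Proof.
move=> h; apply: (big_rec2 (fun a b => odd a = odd b)) => // i a b Pi e.
by rewrite !oddD h // e.
Qed.

Lemma invol_odd (T : finType) (P : pred T) (F : T -> nat) (f : T -> T) :
  involutive f -> (forall x, P (f x) = P x) -> (forall x, F (f x) = F x) ->
  odd (\sum_(x | P x) F x) = odd (\sum_(x | P x && (f x == x)) F x).
Proof.
move=> fK Pf Ff.
rewrite (bigID (fun x => f x == x)) /= oddD.
rewrite [X in _ (+) odd X](bigID (fun x => (enum_rank x < enum_rank (f x))%N)) /=.
set A := \sum_(i | _ && (_ < _)%N) _.
have -> : \sum_(x | P x && (f x != x) && ~~ (enum_rank x < enum_rank (f x))%N) F x = A.
  rewrite /A (reindex_inj (inv_inj fK)) /=.
  apply: eq_big => [x|x _]; last exact: Ff.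
  rewrite fK Pf eq_sym; case: (P x) => //=; case: (f x =P x) => //= ne.
  rewrite -leqNgt leq_eqVlt; case: eqP => //= e.
  by case: ne; apply: enum_rank_inj; apply: val_inj.
by rewrite addnn odd_double addbF.
Qed.

Definition toggle n (j0 : 'I_n) (o : {ffun 'I_n -> bool}) : {ffun 'I_n -> bool} :=
  [ffun j => if j == j0 then ~~ o j else o j].

Lemma toggleK n (j0 : 'I_n) : involutive (toggle j0).
Proof. by move=> o; apply/ffunP => j; rewrite !ffunE; case: eqP => // _; rewrite negbK. Qed.

Definition Dc (P : pred nat) n (m : {ffun 'I_n -> 'I_n.+1}) (i : 'I_n) : bool :=
  [&& \sum_(j < n) j.+1 * m j == n, 0 < m i,
      [forall j, (j != i) ==> (nat_of_ord (m j) == 0)] & P i.+1].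

Lemma inner_odd (P : pred nat) n (m : {ffun 'I_n -> 'I_n.+1}) (i : 'I_n) :
  odd (\sum_(o : {ffun 'I_n -> bool})
        (if [&& is_overpartition m o, is_smallest_part m i, ~~ o i & P i.+1]
         then (m i : nat) else 0))
  = odd (if Dc P m i then (m i : nat) else 0).
Proof.
case: (pickP (fun j => (j != i) && (0 < m j))) => [j0 /andP[ji mj0] | none].
  have -> : Dc P m i = false.
    apply/negP => /and4P[_ _ /forallP /(_ j0) + _].
    by rewrite ji /= => /eqP e; rewrite e in mj0.
  rewrite -big_mkcond (@invol_odd _ _ _ _ (toggleK j0)) //=.
  - rewrite big_pred0 // => o; apply/negP => /andP[_ /eqP/ffunP /(_ j0)].
    by rewrite ffunE eqxx; case: (o j0).
  - move=> o; rewrite /is_overpartition !ffunE.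
    have -> : (i == j0) = false by rewrite eq_sym (negbTE ji).
    congr (_ && _); congr (_ && _).
    apply/forallP/forallP => h j; have := h j; rewrite !ffunE;
      case: (j =P j0) => [->|//]; by rewrite mj0 !implybT.

have oth : forall j, j != i -> nat_of_ord (m j) = 0.
  by move=> j ji; have := none j; rewrite ji /=; case: (m j) => -[].
have sm : is_smallest_part m i = (0 < m i).
  rewrite /is_smallest_part; case: (0 < m i) => //=.
  apply/forallP => j; case: (j =P i) => [->|/eqP ji]; first by rewrite leqnn implybT.
  by rewrite (oth j ji).
have -> : Dc P m i = [&& \sum_(j < n) j.+1 * m j == n, 0 < m i & P i.+1].
  rewrite /Dc.
  have -> : [forall j, (j != i) ==> (nat_of_ord (m j) == 0)].
    by apply/forallP => j; apply/implyP => /oth ->.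
  done.
rewrite -big_mkcond /is_overpartition sm.
case: ifP => [/and3P[s0 p0 q0] | c].
  rewrite (eq_bigl (pred1 [ffun=> false])) ?big_pred1_eq // => o /=.
  rewrite s0 p0 q0 /= andbT.
  apply/andP/eqP => [[/forallP h oi]|->].
    apply/ffunP => j; rewrite ffunE; case: (j =P i) => [->|/eqP ji].
      by apply/negbTE.
    by have := h j; rewrite oth //; case: (o j).
  by rewrite ffunE; split => //; apply/forallP => j; rewrite ffunE.
rewrite big_pred0 // => o; apply/negP => /and4P[/andP[s0 _] p0 _ q0].
by rewrite s0 p0 q0 in c.
Qed.

Lemma Dc_sum (P : pred nat) n (m : {ffun 'I_n -> 'I_n.+1}) (i : 'I_n) :
  Dc P m i -> i.+1 * m i = n.
Proof.
case/and4P => /eqP e _ /forallP h _.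
rewrite -[RHS]e (bigD1 i) //= big1 ?addn0 // => j ji.
by have := h j; rewrite ji /= => /eqP ->; rewrite muln0.
Qed.

Lemma sum_Dc (P : pred nat) n (i : 'I_n) :
  \sum_(m : {ffun 'I_n -> 'I_n.+1}) (if Dc P m i then (m i : nat) else 0)
  = if (i.+1 %| n) && P i.+1 then n %/ i.+1 else 0.
Proof.
rewrite -big_mkcond; case: ifP => [/andP[dv pi]|c]; last first.
  rewrite big_pred0 // => m; apply/negP => D.
  have := Dc_sum D; case/and4P: D => _ _ _ pi e.
  by move: c; rewrite pi andbT => /negP; apply; rewrite -[X in _ %| X]e dvdn_mulr.
have lt : n %/ i.+1 < n.+1 by rewrite ltnS leq_div.
set m0 : {ffun 'I_n -> 'I_n.+1} :=
  [ffun j => if j == i then inord (n %/ i.+1) else ord0].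
have m0i : nat_of_ord (m0 i) = n %/ i.+1 by rewrite ffunE eqxx inordK.
rewrite (eq_bigl (pred1 m0)) ?big_pred1_eq // => m /=.
apply/idP/eqP => [D|->].
  have e := Dc_sum D; case/and4P: D => _ _ /forallP h _.
  apply/ffunP => j; apply: val_inj; rewrite ffunE; case: (j =P i) => [->|/eqP ji].
    by rewrite /= inordK // -[X in X %/ _]e mulKn.
  by have := h j; rewrite ji /= => /eqP ->.
apply/and4P; split => //.
- rewrite (bigD1 i) //= big1 ?addn0.
    by rewrite m0i mulnC divnK.
  by move=> j ji; rewrite ffunE (negbTE ji) muln0.
- by rewrite m0i divn_gt0 // ltn_ord.
- by apply/forallP => j; apply/implyP => ji; rewrite ffunE (negbTE ji).
Qed.

Lemma sptbar_P_odd (P : pred nat) n :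
  odd (sptbar_P P n) = odd (\sum_(i < n | (i.+1 %| n) && P i.+1) n %/ i.+1).
Proof.
rewrite /sptbar_P.
have e1 : \sum_(m : {ffun 'I_n -> 'I_n.+1}) \sum_(o : {ffun 'I_n -> bool})
    \sum_(i < n | [&& is_overpartition m o, is_smallest_part m i, ~~ o i & P i.+1])
      (m i : nat) =
  \sum_(m : {ffun 'I_n -> 'I_n.+1}) \sum_(i < n) \sum_(o : {ffun 'I_n -> bool})
    (if [&& is_overpartition m o, is_smallest_part m i, ~~ o i & P i.+1]
      then (m i : nat) else 0).
  apply: eq_bigr => m _; rewrite -exchange_big; apply: eq_bigr => o _.
  by rewrite big_mkcond.
rewrite e1.
transitivity (odd (\sum_(m : {ffun 'I_n -> 'I_n.+1}) \sum_(i < n)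
    (if Dc P m i then (m i : nat) else 0))).
  apply: odd_sum_congr => m _; apply: odd_sum_congr => i _; exact: inner_odd.
rewrite exchange_big /= [in RHS]big_mkcond; congr odd; apply: eq_bigr => i _.
exact: sum_Dc.
Qed.

Lemma divisor_pair d N : 0 < N -> d %| N ->
  [/\ 0 < d, N %/ d %| N, 0 < N %/ d, N %/ (N %/ d) = d & N %/ d * d = N].
Proof.
move=> N0 /dvdnP[q eN]; subst N; rewrite muln_gt0 in N0; case/andP: N0 => q0 d0.
rewrite mulnK // mulKn //; split => //; by rewrite dvdn_mulr.
Qed.

Lemma sq_count N : 0 < N ->
  odd (count (fun d => d %| N) (iota 1 N)) <-> exists k, N = k ^ 2.
Proof.
move=> N0.
have -> : count (fun d => d %| N) (iota 1 N) = \sum_(d < N.+1 | d %| N) 1.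
  rewrite -(big_mkord (fun d => d %| N) (fun _ => 1)) -sum1_count /index_iota subn0 /= big_cons.
  by rewrite dvd0n eqn0Ngt N0 /= sum1_count.
pose f (d : 'I_N.+1) : 'I_N.+1 := if nat_of_ord d %| N then inord (N %/ d) else d.
have fK : involutive f.
  move=> d; case: (boolP (nat_of_ord d %| N)) => dv; last by rewrite /f (negbTE dv) (negbTE dv).
  have [d0 dv' q0 qq _] := divisor_pair N0 dv.
  by rewrite /f dv /= inordK ?ltnS ?leq_div // dv' qq inord_val.
rewrite (@invol_odd _ _ _ _ fK); first last.
- by [].
- move=> d; case: (boolP (nat_of_ord d %| N)) => dv; last by rewrite /f (negbTE dv) (negbTE dv).
  have [d0 dv' q0 qq _] := divisor_pair N0 dv.
  by rewrite /f dv /= inordK ?ltnS ?leq_div // dv'.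
have fix_eq : forall d : 'I_N.+1, ((nat_of_ord d %| N) && (f d == d)) = (N == d * d).
  move=> d; rewrite /f; apply/idP/eqP => [/andP[dv /eqP e]|e].
    have [d0 dv' q0 qq qd] := divisor_pair N0 dv.
    move: e => /(congr1 val) /=; rewrite dv inordK ?ltnS ?leq_div // => e.
    by rewrite -[LHS]qd e.
  have dv : nat_of_ord d %| N by rewrite [X in _ %| X]e dvdn_mulr.
  rewrite dv /=; apply/eqP/val_inj => /=.
  have [d0 _ _ _ _] := divisor_pair N0 dv.
  rewrite inordK; first by rewrite [X in X %/ _]e mulnK.
  by rewrite ltnS leq_div.
rewrite (eq_bigl _ _ fix_eq).
case: (boolP [exists d : 'I_N.+1, N == d * d]) => [/existsP[d /eqP e]|ne].
  rewrite (eq_bigl (pred1 d)) ?big_pred1_eq; last first.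
    move=> d' /=; apply/eqP/eqP => [e'|->//]; apply: val_inj => /=; nia.
  by split => // _; exists d; rewrite -mulnn.
rewrite big_pred0; last by move=> d; apply/negP => e; case/existsP: ne; exists d.
split => // -[k ek].
have kle : k < N.+1 by rewrite ltnS; rewrite ek in N0 *; nia.
by case/existsP: ne; exists (Ordinal kle); apply/eqP; rewrite /= mulnn.
Qed.

Definition cnt (Q : pred nat) n := count (fun d => [&& d %| n, Q d & odd (n %/ d)]) (iota 1 n).

Lemma iota_succ m n : iota m.+1 n = map succn (iota m n).
Proof. by elim: n m => //= n IH m; rewrite IH. Qed.

Lemma odd_sum_count (s : seq nat) (Q : pred nat) (G : nat -> nat) :
  odd (\sum_(d <- s | Q d) G d) = odd (count (fun d => Q d && odd (G d)) s).
Proof.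
elim: s => [|x s IH]; first by rewrite big_nil.
rewrite big_cons /=; case: (Q x) => //=; by rewrite oddD IH; case: (odd (G x)).
Qed.

Lemma sum_to_count (Q : pred nat) n :
  odd (\sum_(i < n | (i.+1 %| n) && Q i.+1) n %/ i.+1) = odd (cnt Q n).
Proof.
rewrite -(big_mkord (fun i => (i.+1 %| n) && Q i.+1) (fun i => n %/ i.+1)).
rewrite odd_sum_count /cnt iota_succ count_map /index_iota subn0.
by congr odd; apply: eq_count => i /=; rewrite andbA.
Qed.

Lemma count_split (T : Type) (a b : pred T) s :
  count a s = count (fun x => a x && b x) s + count (fun x => a x && ~~ b x) s.
Proof.
elim: s => //= x s ->; case: (a x); case: (b x) => /=; lia.
Qed.

Lemma split_cnt n : cnt predT n = cnt odd n + cnt (fun k => ~~ odd k) n.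
Proof.
rewrite /cnt (count_split _ odd); congr (_ + _); apply: eq_count => d /=;
  by case: (d %| n); case: (odd d); case: (odd (n %/ d)).
Qed.

Lemma cnt_odd_odd n : odd n -> cnt odd n = count (fun d => d %| n) (iota 1 n).
Proof.
move=> on; apply: eq_count => d /=; case: (boolP (d %| n)) => //= dv.
by move: on; rewrite -{1}(divnK dv) oddM => /andP[-> ->].
Qed.

Lemma cnt_odd_even n : ~~ odd n -> cnt odd n = 0.
Proof.
move=> on; apply/eqP; rewrite -leqn0 leqNgt -has_count; apply/hasP => -[d _].
case/and3P => dv od oq; move: on; by rewrite -(divnK dv) oddM oq od.
Qed.

Lemma cnt_even_odd n : odd n -> cnt (fun k => ~~ odd k) n = 0.
Proof.
move=> on; apply/eqP; rewrite -leqn0 leqNgt -has_count; apply/hasP => -[d _].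
case/and3P => dv od oq; move: on; by rewrite -(divnK dv) oddM (negbTE od) andbF.
Qed.

Lemma count_double (Q : pred nat) : (forall d, odd d -> Q d = false) ->
  forall m, count Q (iota 1 (2 * m)) = count (fun d => Q (2 * d)) (iota 1 m).
Proof.
move=> Qo; elim => // m IH.
rewrite (_ : 2 * m.+1 = 2 * m + 2); last lia.
rewrite (_ : m.+1 = m + 1); last lia.
rewrite iotaD count_cat IH [in RHS]iotaD count_cat; congr (_ + _) => /=.
rewrite Qo; last by rewrite oddD oddM.
by rewrite (_ : (1 + 2 * m).+1 = 2 * (1 + m)) //; lia.
Qed.

Lemma cnt_even_double m : 0 < m -> cnt (fun k => ~~ odd k) (2 * m) = cnt predT m.
Proof.
move=> m0; rewrite /cnt count_double; last by move=> d ->; rewrite andbF.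
apply: eq_count => d /=; rewrite dvdn_pmul2l // oddM /= divnMl //.
Qed.

Lemma even_half k : ~~ odd k -> k = 2 * k./2.
Proof. by move=> ok; have := odd_double_half k; rewrite (negbTE ok) add0n -mul2n. Qed.

Lemma cnt1_iff n : 0 < n -> odd (cnt odd n) <-> exists k, odd k /\ n = k ^ 2.
Proof.
move=> n0; case: (boolP (odd n)) => on.
  rewrite cnt_odd_odd // sq_count //; split => -[k ek]; last by exists k; case: ek.
  by exists k; split => //; rewrite ek oddX in on.
rewrite cnt_odd_even //; split => // -[k [ok ek]].
by rewrite ek oddX ok in on.
Qed.

Lemma S2_double m :
  ((exists k, ~~ odd k /\ 2 * m = k ^ 2) \/ (exists k, 2 * m = 2 * k ^ 2)) <->
  ((exists k, m = k ^ 2) \/ (exists k, m = 2 * k ^ 2)).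
Proof.
split.
  case=> [[k [ok ek]]|[k ek]]; last by left; exists k; lia.
  right; exists k./2; have := even_half ok; set j := k./2 => kj.
  rewrite kj in ek; nia.
case=> [[k ek]|[k ek]]; first by right; exists k; lia.
left; exists (2 * k); split; first by rewrite oddM.
rewrite ek; nia.
Qed.

Lemma cnt2_iff n : 0 < n -> odd (cnt (fun k => ~~ odd k) n) <->
  (exists k, ~~ odd k /\ n = k ^ 2) \/ (exists k, n = 2 * k ^ 2).
Proof.
elim/ltn_ind: n => n IH n0.
case: (boolP (odd n)) => on.
  rewrite cnt_even_odd //; split => // -[[k [ok ek]]|[k ek]];
    by move: on; rewrite ek ?oddM ?oddX ?(negbTE ok).
have en := even_half on; set m := n./2 in en.
have m0 : 0 < m by lia.
rewrite en cnt_even_double // split_cnt oddD S2_double.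
case: (boolP (odd m)) => om.
  rewrite cnt_even_odd // addbF cnt1_iff //.
  split => [[k [ok ek]]|[[k ek]|[k ek]]]; first by left; exists k.
    by exists k; split => //; rewrite ek oddX in om.
  by move: om; rewrite ek oddM.
rewrite cnt_odd_even //= (IH m) //; last lia.
split => [[[k [ok ek]]|[k ek]]|[[k ek]|[k ek]]].
- by left; exists k.
- by right; exists k.
- by left; exists k; split => //; rewrite ek oddX in om.
- by right; exists k.
Qed.

Theorem theorem1p4 (n : nat) (hn : 0 < n) :
  (odd (sptbar n) <-> (exists k, n = k ^ 2) \/ (exists k, n = 2 * k ^ 2)) /\
  (odd (sptbar1 n) <-> exists k, odd k /\ n = k ^ 2) /\
  (odd (sptbar2 n) <->
     (exists k, ~~ odd k /\ n = k ^ 2) \/ (exists k, n = 2 * k ^ 2)).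
Proof.
split; last split.
- rewrite /sptbar sptbar_P_odd sum_to_count split_cnt oddD.
  case: (boolP (odd n)) => on.
    rewrite cnt_even_odd // addbF cnt1_iff //.
    split => [[k [ok ek]]|[[k ek]|[k ek]]]; first by left; exists k.
      by exists k; split => //; rewrite ek oddX in on.
    by move: on; rewrite ek oddM.
  rewrite cnt_odd_even // cnt2_iff //.
  split => [[[k [ok ek]]|[k ek]]|[[k ek]|[k ek]]].
  + by left; exists k.
  + by right; exists k.
  + by left; exists k; split => //; rewrite ek oddX in on.
  + by right; exists k.
- by rewrite /sptbar1 sptbar_P_odd (sum_to_count odd) cnt1_iff.
- by rewrite /sptbar2 sptbar_P_odd (sum_to_count (fun k => ~~ odd k)) cnt2_iff.
Qed.
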